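(* Let $F_t$, $t\in[0,1]$, be a one-parameter family on a complete metric space $(\mathbb X,d)$ satisfying (H1) and (H2). If $A^\bullet$ is any upper transition attractor of $F_t$, then (i) $F_1(A^\bullet)=A^\bullet$. If in addition $F_t$ satisfies (H3), then (ii) $Q\subseteq A^\bullet$, and in particular $A_\bullet\subseteq A^\bullet$, where $A_\bullet$ is the lower transition attractor.
   Context: Let $(\mathbb X,d)$ be a complete metric space. A one-parameter family is $F_t=\{f_{(1,t)},\dots,f_{(N,t)}\}$, $t\in[0,1]$, $N\ge2$, of continuous self-maps of $\mathbb X$. $\mathrm{Lip}(f,d)=\sup_{x\ne y}d(f(x),f(y))/d(x,y)$ and $\mathrm{Lip}(F_t,d)=\max_i\mathrm{Lip}(f_{(i,t)},d)$. Conditions: (H1) for every $x\in\mathbb X$ and every $i$, the map $t\mapsto f_{(i,t)}(x)$ is continuous on $[0,1]$; (H2) $\mathrm{Lip}(F_t,d)<1$ for all $t\in[0,1)$; (H3) for each $i$ the limit $q_i=\lim_{t\to1^-}q_{i,t}$ exists, where $q_{i,t}$ is the unique fixed point of $f_{(i,t)}$ for $t\in[0,1)$; $Q=\{q_1,\dots,q_N\}$. For an IFS $F$ and $S\subseteq\mathbb X$, $F(S)=\overline{\bigcup_{f\in F}f(S)}$. For $t\in[0,1)$, $A_t$ is the attractor of $F_t$, the unique nonempty compact set with $F_t(A_t)=A_t$. With $h$ the Hausdorff metric, an upper transition attractor is a compact set $A^\bullet$ for which there is an increasing sequence $t_n\in[0,1)$, $t_n\to1$, with $h(A_{t_n},A^\bullet)\to0$.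 The lower transition attractor is the smallest (w.r.t. inclusion) set $A_\bullet$ with $F_1(A_\bullet)=A_\bullet$ and $Q\subseteq A_\bullet$. *)

(* Defs.v *)
From HB Require Import structures.
From mathcomp Require Import all_boot all_order all_algebra.
From mathcomp Require Import all_classical all_reals all_analysis.
Set Implicit Arguments. Unset Strict Implicit. Unset Printing Implicit Defensive.
Import Order.TTheory GRing.Theory Num.Theory numFieldNormedType.Exports.
Local Open Scope classical_set_scope.
Local Open Scope ring_scope.

Section Defs.
Context {R : realType} {X : Type} (d : X -> X -> R).

Definition is_metric : Prop :=
  [/\ forall x y, 0 <= d x y,
      forall x y, d x y = 0 <-> x = y,
      forall x y, d x y = d y x
    & forall x y z, d x z <= d x y + d y z].

Definition cauchy_seq (u : nat -> X) : Prop :=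
  forall e : R, 0 < e -> exists M : nat,
    forall m n, (M <= m)%N -> (M <= n)%N -> d (u m) (u n) < e.

Definition converges_to (u : nat -> X) (l : X) : Prop :=
  forall e : R, 0 < e -> exists M : nat, forall n, (M <= n)%N -> d (u n) l < e.

Definition complete_metric : Prop :=
  forall u, cauchy_seq u -> exists l, converges_to u l.

Definition dopen (U : set X) : Prop :=
  forall x, U x -> exists r : R, 0 < r /\ forall y, d x y < r -> U y.

Definition dcompact (K : set X) : Prop :=
  forall (I : Type) (U : I -> set X), (forall i, dopen (U i)) ->
    K `<=` \bigcup_(i in [set: I]) U i ->
    exists F : set I, finite_set F /\ K `<=` \bigcup_(i in F) U i.

Definition dclosure (S : set X) : set X :=
  [set x | forall e : R, 0 < e -> exists2 y, S y & d x y < e].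

Definition dcontinuous (g : X -> X) : Prop :=
  forall x (e : R), 0 < e -> exists2 del : R, 0 < del &
    forall y, d x y < del -> d (g x) (g y) < e.

Definition Lip (g : X -> X) : \bar R :=
  ereal_sup [set r | exists x y, x <> y /\ r = ((d (g x) (g y)) / d x y)%:E].

Definition LipF (N : nat) (F : 'I_N -> X -> X) : \bar R :=
  \big[maxe/-oo%E]_(i < N) Lip (F i).

Definition IFS_img (N : nat) (F : 'I_N -> X -> X) (S : set X) : set X :=
  dclosure (\bigcup_(i in [set: 'I_N]) (F i @` S)).

(** Hausdorff distance (used on nonempty compact sets) *)
Definition dist_set (x : X) (B : set X) : R := inf [set d x b | b in B].
Definition hdist (A B : set X) : R :=
  Num.max (sup [set dist_set a B | a in A]) (sup [set dist_set b A | b in B]).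

(** H1 for a single path t |-> g t, continuity on [0,1] *)
Definition path_continuous01 (g : R -> X) : Prop :=
  forall t : R, 0 <= t <= 1 -> forall e : R, 0 < e -> exists2 del : R, 0 < del &
    forall s : R, 0 <= s <= 1 -> `|s - t| < del -> d (g s) (g t) < e.

Definition left_limit_at1 (g : R -> X) (l : X) : Prop :=
  forall e : R, 0 < e -> exists2 del : R, 0 < del &
    forall t : R, 1 - del < t < 1 -> d (g t) l < e.

Definition upper_transition_attractor (A : R -> set X) (Aup : set X) : Prop :=
  [/\ dcompact Aup, Aup !=set0 &
      exists tn : nat -> R,
        [/\ forall n, 0 <= tn n < 1,
            forall n, tn n < tn n.+1,
            tn @ \oo --> (1 : R)
          & (fun n => hdist (A (tn n)) Aup) @ \oo --> (0 : R)]].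

Definition lower_transition_attractor (N : nat) (F1 : 'I_N -> X -> X)
    (Q : set X) (S : set X) : Prop :=
  [/\ IFS_img F1 S = S, Q `<=` S &
      forall T, IFS_img F1 T = T -> Q `<=` T -> S `<=` T].

End Defs.

(* Main.v *)
Require Import Defs.
From HB Require Import structures.
From mathcomp Require Import all_boot all_order all_algebra.
From mathcomp Require Import all_classical all_reals all_analysis.
From mathcomp Require Import lra.
Import Order.TTheory GRing.Theory Num.Theory numFieldNormedType.Exports.
Local Open Scope classical_set_scope.
Local Open Scope ring_scope.

Lemma finite_surj T (A : set T) : finite_set A ->
  exists n (h : 'I_n -> T), forall x, A x -> exists i, h i = x.
Proof.
rewrite finite_setP => -[n].
rewrite (card_eqr card_II) => /card_esym/card_eqVP[f]; pose g := f \o to_setT.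
exists n, (fun i => val (g i)) => x Ax.
by exists ((g^-1)%FUN (SigSub (mem_set Ax))); rewrite [g _]invK//= inE.
Qed.

Arguments finite_surj {T A}.

Lemma ev_ex (P : nat -> Prop) :
  (\forall n \near \oo, P n) -> exists M, forall n, (M <= n)%N -> P n.
Proof. by case=> M _ HM; exists M => n /HM. Qed.

Lemma finite_ev I (F : set I) (P : I -> nat -> Prop) : finite_set F ->
  (forall i, F i -> exists M, forall n, (M <= n)%N -> P i n) ->
  exists M, forall n, (M <= n)%N -> forall i, F i -> P i n.
Proof.
move=> /finite_surj[k [h hF]] HP.
have H : \forall n \near \oo, forall j : 'I_k, F (h j) -> P (h j) n.
  apply: filter_forall => j.
  have [Fj|nFj] := pselect (F (h j)).
    have [M HM] := HP _ Fj; exists M => // n /= Mn _; exact: HM.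
  by apply: nearW => n /nFj.
have [M HM] := @ev_ex _ H; exists M => n Mn i Fi.
have [j hj] := hF _ Fi; rewrite -hj; apply: HM => //; by rewrite hj.
Qed.

Lemma nat_mono_sub T (U : nat -> set T) : (forall k, U k `<=` U k.+1) ->
  forall i k, (i <= k)%N -> U i `<=` U k.
Proof.
move=> mU i k /subnK <-; elim: (k - i)%N => [|m IH] //= x /IH.
by rewrite addSn; apply: mU.
Qed.

Section Metric.
Context {R : realType} {X : Type} (d : X -> X -> R) (dm : is_metric d).

Lemma dge0 x y : 0 <= d x y. Proof. by case: dm. Qed.
Lemma dxx x : d x x = 0. Proof. by case: dm => _ H _ _; apply/H. Qed.
Lemma dsym x y : d x y = d y x. Proof. by case: dm. Qed.
Lemma dtri x y z : d x z <= d x y + d y z. Proof. by case: dm. Qed.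
Lemma dneq x y : x <> y -> 0 < d x y.
Proof.
move=> xy; rewrite lt_neqAle dge0 andbT; apply/eqP => H.
by case: dm => _ Hd _ _; apply: xy; apply/Hd.
Qed.

Lemma compact_nested K (U : nat -> set X) : dcompact d K ->
  (forall k, dopen d (U k)) -> (forall k, U k `<=` U k.+1) ->
  K `<=` \bigcup_(k in [set: nat]) U k -> exists k, K `<=` U k.
Proof.
move=> cK oU mU KU; have [F [fF KF]] := cK nat U oU KU.
have [m [h hF]] := finite_surj fF.
exists (\max_(j < m) h j)%N => x /KF [i Fi Uix].
have [j hji] := hF _ Fi.
apply: (@nat_mono_sub _ U mU i _ _ _ Uix); rewrite -hji.
exact: (@leq_bigmax _ (fun j => h j)).
Qed.

Lemma compact_closed K : dcompact d K -> dclosure d K `<=` K.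
Proof.
move=> cK x xK; apply: contrapT => nKx.
pose U k := [set y | (k.+1%:R)^-1 < d x y].
have [k Kk] : exists k, K `<=` U k.
  apply: compact_nested => //.
  - move=> k; rewrite /dopen /U /=; move: (k.+1%:R^-1 : R) => r y Uy.
    exists (d x y - r); split; first by rewrite subr_gt0.
    move=> w yw; have := dtri x w y; rewrite (dsym w y); lra.
  - move=> k y; rewrite /U /= => /(le_lt_trans _); apply.
    by rewrite lef_pV2 ?posrE// ler_nat.
  - move=> y Ky; have dp : 0 < d x y by apply: dneq => xy; apply: nKx; rewrite xy.
    exists (Num.truncn (d x y)^-1) => //; rewrite /U /=.
    rewrite -[ltRHS]invrK ltf_pV2 ?posrE ?invr_gt0//.
    exact: truncnS_gt.
have [y Ky] := xK ((k.+1%:R)^-1) ltac:(by rewrite invr_gt0).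
by move/(lt_trans (Kk _ Ky)); rewrite ltxx.
Qed.

Lemma compact_bounded K x0 : dcompact d K -> exists M, forall y, K y -> d x0 y <= M.
Proof.
move=> cK; pose U k := [set y | d x0 y < k%:R].
have [k Kk] : exists k, K `<=` U k.
  apply: compact_nested => //.
  - move=> k y Uy; exists (k%:R - d x0 y); split.
      by rewrite subr_gt0.
    move=> z yz; rewrite /U /=.
    have := dtri x0 y z; lra.
  - by move=> k y; rewrite /U /= => /lt_le_trans; apply; rewrite ler_nat.
  - move=> y Ky; exists (Num.truncn (d x0 y)).+1 => //; exact: truncnS_gt.
by exists k%:R => y /Kk /ltW.
Qed.

Lemma lip_contr g : (Lip d g < 1%:E)%E ->
  exists c : R, (0 <= c < 1) /\ forall x y, d (g x) (g y) <= c * d x y.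
Proof.
move=> L1.
have ub x y : x <> y -> ((d (g x) (g y) / d x y)%:E <= Lip d g)%E.
  by move=> xy; apply: ereal_sup_ubound; exists x, y.
move: L1 ub; case: (Lip d g) => [r||] L1 ub.
- rewrite lte_fin in L1; exists (Num.max 0 r); split.
    by rewrite le_max lexx /= gt_max ltr01 L1.
  move=> x y; have [->|xy] := pselect (x = y); first by rewrite !dxx mulr0.
  have := ub _ _ xy; rewrite lee_fin ler_pdivrMr ?dneq// => H.
  apply: le_trans H _; apply: ler_wpM2r; first exact: dge0.
  by rewrite le_max lexx orbT.
- by move: L1; rewrite ltNge leey.
- exists 0; split; first by rewrite lexx ltr01.
  move=> x y; have [->|xy] := pselect (x = y); first by rewrite !dxx mulr0.
  by have := ub _ _ xy; rewrite leeNy_eq.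
Qed.

Lemma Lip_le_LipF N (F : 'I_N -> X -> X) i : (Lip d (F i) <= LipF d F)%E.
Proof. rewrite /LipF; exact: le_bigmax. Qed.

Lemma dist_le a L l0 : L l0 -> dist_set d a L <= d a l0.
Proof.
move=> Ll0; rewrite /dist_set; apply: ge_inf; last by exists l0.
by exists 0 => _ [b _ <-]; exact: dge0.
Qed.

Lemma sup_dist_lt K L e k : dcompact d K -> L !=set0 ->
  sup [set dist_set d a L | a in K] < e -> K k -> exists2 l, L l & d k l < e.
Proof.
move=> cK [l0 Ll0] Hs Kk.
have [M HM] := @compact_bounded K l0 cK.
have ub : has_ubound [set dist_set d a L | a in K].
  exists M => _ [a Ka <-]; apply: le_trans (@dist_le a L l0 Ll0) _.
  rewrite dsym; exact: HM.
have H : dist_set d k L < e.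
  by apply: le_lt_trans Hs; apply: ub_le_sup => //; exists k.
have ne : [set d k b | b in L] !=set0 by exists (d k l0), l0.
by have [_ [l Ll <-]] := inf_lt ne H; exists l.
Qed.

Lemma hdist_close K L e : dcompact d K -> dcompact d L -> K !=set0 -> L !=set0 ->
  hdist d K L < e ->
  (forall k, K k -> exists2 l, L l & d k l < e) /\
  (forall l, L l -> exists2 k, K k & d l k < e).
Proof.
move=> cK cL nK nL; rewrite /hdist gt_max => /andP[H1 H2]; split => x Hx.
  exact: (@sup_dist_lt K L e x cK nL H1 Hx).
exact: (@sup_dist_lt L K e x cL nK H2 Hx).
Qed.

End Metric.
Arguments dge0 {R X d} dm.
Arguments dxx {R X d} dm.
Arguments compact_closed {R X d} dm {K}.
Arguments dist_le {R X d} dm a {L l0}.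
Arguments lip_contr {R X d} dm {g}.
Arguments hdist_close {R X d} dm {K L e}.
Arguments Lip_le_LipF {R X} d {N} F i.

Theorem mainTheorem8 (R : realType) (X : Type) (d : X -> X -> R) (N : nat)
    (f : 'I_N -> R -> X -> X) (A : R -> set X) (Aup : set X) :
  is_metric d -> complete_metric d -> (2 <= N)%N ->
  (* each f_(i,t) is a continuous self-map *)
  (forall i (t : R), 0 <= t <= 1 -> dcontinuous d (f i t)) ->
  (* (H1) *)
  (forall i x, path_continuous01 d (fun t => f i t x)) ->
  (* (H2) *)
  (forall t : R, 0 <= t < 1 -> (LipF d (fun i => f i t) < 1%:E)%E) ->
  (* A t is the attractor of F_t for t in [0,1) *)
  (forall t : R, 0 <= t < 1 ->
     [/\ A t !=set0, dcompact d (A t) & IFS_img d (fun i => f i t) (A t) = A t]) ->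
  upper_transition_attractor d A Aup ->
  (* (i) *)
  IFS_img d (fun i => f i 1) Aup = Aup /\
  (* under (H3): (ii) *)
  (forall (qt : 'I_N -> R -> X) (q : 'I_N -> X),
     (forall i (t : R), 0 <= t < 1 -> f i t (qt i t) = qt i t) ->
     (forall i, left_limit_at1 d (qt i) (q i)) ->
     [set q i | i in [set: 'I_N]] `<=` Aup /\
     (forall S, lower_transition_attractor d (fun i => f i 1)
                   [set q i | i in [set: 'I_N]] S -> S `<=` Aup)).
Proof.
Proof.
move=> dm _ _ _ H1 H2 HA [cB nB [tn [tn01 _ tn1 hn0]]].
have T3 := @dtri R X d dm; have Sy := @dsym R X d dm.
have An n := HA _ (tn01 n).
have E1 e : 0 < e -> exists M, forall n, (M <= n)%N ->
    (forall a, A (tn n) a -> exists2 b, Aup b & d a b < e) /\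
    (forall b, Aup b -> exists2 a, A (tn n) a & d b a < e).
  move=> e0; move/cvgrPdist_lt: hn0 => /(_ e e0) H; have [M HM] := @ev_ex _ H.
  exists M => n /HM; rewrite sub0r normrN => /(le_lt_trans (ler_norm _)) Hh.
  have [ne cA _] := An n; exact: (hdist_close dm cA cB ne nB Hh).
have E2 i x e : 0 < e -> exists M, forall n, (M <= n)%N ->
    d (f i (tn n) x) (f i 1 x) < e.
  move=> e0; have [del del0 Hdel] := H1 i x 1 ltac:(by rewrite ler01 lexx) e e0.
  move/cvgrPdist_lt: tn1 => /(_ del del0) H; have [M HM] := @ev_ex _ H.
  exists M => n /HM Hn; apply: Hdel; last by rewrite distrC.
  by have /andP[a b] := tn01 n; rewrite a ltW.
have NE n i x y : d (f i (tn n) x) (f i (tn n) y) <= d x y.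
  have [c [/andP[c0 c1] Hc]] := lip_contr dm
    (le_lt_trans (Lip_le_LipF d (fun i => f i (tn n)) i) (H2 _ (tn01 n))).
  by apply: le_trans (Hc x y) _; rewrite ler_piMl ?(dge0 dm) // ltW.
have NE1 i x y : d (f i 1 x) (f i 1 y) <= d x y.
  apply/ler_addgt0Pr => e e0.
  have e2 : 0 < e / 2 by rewrite divr_gt0.
  have [M1 HM1] := E2 i x _ e2; have [M2 HM2] := E2 i y _ e2.
  pose n := maxn M1 M2.
  have := HM1 n (leq_maxl _ _); have := HM2 n (leq_maxr _ _); have := NE n i x y.
  have := T3 (f i 1 x) (f i (tn n) x) (f i 1 y).
  have := T3 (f i (tn n) x) (f i (tn n) y) (f i 1 y).
  rewrite (Sy (f i 1 x) (f i (tn n) x)); lra.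
have UC i e : 0 < e -> exists M, forall n, (M <= n)%N ->
    forall b, Aup b -> d (f i (tn n) b) (f i 1 b) < e.
  move=> e0; have e3 : 0 < e / 3 by rewrite divr_gt0.
  pose U y := [set z | Aup y /\ d y z < e / 3].
  have oU y : dopen d (U y).
    move=> z [By yz]; exists (e / 3 - d y z); split; first by rewrite subr_gt0.
    by move=> w zw; split => //; have := T3 y z w; lra.
  have cov : Aup `<=` \bigcup_(y in [set: X]) U y.
    by move=> b Bb; exists b => //; split => //; rewrite (dxx dm).
  have [F [fF HF]] := cB X U oU cov.
  have [M HM] := @finite_ev _ _ (fun y n => d (f i (tn n) y) (f i 1 y) < e / 3)
    fF (fun y _ => E2 i y _ e3).
  exists M => n Mn b Bb; have [y Fy [By yb]] := HF _ Bb.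
  have := HM n Mn y Fy; have := NE n i b y; have := NE1 i y b.
  have := T3 (f i (tn n) b) (f i (tn n) y) (f i 1 b).
  have := T3 (f i (tn n) y) (f i 1 y) (f i 1 b).
  rewrite (Sy b y); lra.
have UCa e : 0 < e -> exists M, forall n, (M <= n)%N ->
    forall i b, Aup b -> d (f i (tn n) b) (f i 1 b) < e.
  move=> e0.
  have [M HM] := finite_ev
    _ _ (fun i n => forall b, Aup b -> d (f i (tn n) b) (f i 1 b) < e)
    (@finite_finset _ [set: 'I_N]) (fun i _ => UC i e e0).
  by exists M => n Mn i; apply: (HM n Mn i).
have Ainvt t i a : 0 <= t < 1 -> A t a -> A t (f i t a).
  move=> t01 Aa; have [_ _ Eq] := HA t t01; rewrite -Eq => e e0.
  exists (f i t a); last by rewrite (dxx dm).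
  by exists i => //; exists a.
have Ainv n i a : A (tn n) a -> A (tn n) (f i (tn n) a).
  exact: Ainvt (tn01 n).
have Aden n a e : 0 < e -> A (tn n) a ->
    exists i c, A (tn n) c /\ d a (f i (tn n) c) < e.
  move=> e0; have [_ _ Eq] := An n; rewrite -{1}Eq => Ha.
  have [y [i _ [c Ac <-]] ay] := Ha e e0.
  by exists i, c.
have P1 : IFS_img d (fun i => f i 1) Aup = Aup.
  apply/seteqP; split => x.
  - move=> Hx; apply: (compact_closed dm cB) => e e0.
    have e4 : 0 < e / 4 by rewrite divr_gt0.
    have [y [i _ [b Bb <-]] xy] := Hx _ e4.
    have [M1 HM1] := E1 _ e4; have [M2 HM2] := UCa _ e4.
    pose n := maxn M1 M2.
    have [_ /(_ _ Bb) [a Aa ba]] := HM1 n (leq_maxl _ _).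
    have [/(_ _ (Ainv n i a Aa)) [b2 Bb2 ab2] _] := HM1 n (leq_maxl _ _).
    exists b2 => //.
    have := HM2 n (leq_maxr _ _) i b Bb; have := NE n i b a.
    have := T3 x (f i 1 b) b2; have := T3 (f i 1 b) (f i (tn n) b) b2.
    have := T3 (f i (tn n) b) (f i (tn n) a) b2.
    rewrite (Sy (f i 1 b) (f i (tn n) b)); lra.
  - move=> Bx e e0.
    have e4 : 0 < e / 4 by rewrite divr_gt0.
    have [M1 HM1] := E1 _ e4; have [M2 HM2] := UCa _ e4.
    pose n := maxn M1 M2.
    have [_ /(_ _ Bx) [a Aa xa]] := HM1 n (leq_maxl _ _).
    have [i [c [Ac ac]]] := Aden n a _ e4 Aa.
    have [/(_ _ Ac) [b Bb cb] _] := HM1 n (leq_maxl _ _).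
    exists (f i 1 b); first by exists i => //; exists b.
    have := HM2 n (leq_maxr _ _) i b Bb; have := NE n i c b.
    have := T3 x a (f i 1 b); have := T3 a (f i (tn n) c) (f i 1 b).
    have := T3 (f i (tn n) c) (f i (tn n) b) (f i 1 b); lra.
split => // qt q Hfix Hlim.
have qA i t : 0 <= t < 1 -> A t (qt i t).
  move=> t01; have [[a0 Aa0] cAt EqA] := HA t t01.
  have [c [/andP[c0 c1] Hc]] := lip_contr dm
    (le_lt_trans (Lip_le_LipF d (fun i => f i t) i) (H2 t t01)).
  have ne : [set d (qt i t) b | b in A t] !=set0 by exists (d (qt i t) a0), a0.
  apply: (compact_closed dm cAt) => e e0.
  have del_le : dist_set d (qt i t) (A t) <= 0.
    have : dist_set d (qt i t) (A t) <= c * dist_set d (qt i t) (A t).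
      apply/ler_addgt0Pr => r r0.
      have [_ [a Aa <-] Ha] := @inf_lt R _ (dist_set d (qt i t) (A t) + r) ne
        ltac:(by rewrite ltrDl).
      have fa := Ainvt t i a t01 Aa.
      have := dist_le dm (qt i t) fa.
      rewrite -{2}(Hfix i t t01) => H.
      have := Hc (qt i t) a.
      move: H Ha; move: (dist_set d (qt i t) (A t)) => D H Ha Hc'.
      nra.
    move: (dist_set d (qt i t) (A t)) => D; nra.
  have [_ [a Aa <-] Ha] := @inf_lt R _ e ne (le_lt_trans del_le e0).
  by exists a.
have Qsub : [set q i | i in [set: 'I_N]] `<=` Aup.
  move=> _ [i _ <-]; apply: (compact_closed dm cB) => e e0.
  have e2 : 0 < e / 2 by rewrite divr_gt0.
  have [del del0 Hdel] := Hlim i (e / 2) e2.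
  move/cvgrPdist_lt: tn1 => /(_ del del0) H; have [Ma HMa] := @ev_ex _ H.
  have [M1 HM1] := E1 _ e2; pose n := maxn Ma M1.
  have Hq := qA i (tn n) (tn01 n).
  have [/(_ _ Hq) [b Bb qb] _] := HM1 n (leq_maxr _ _).
  exists b => //.
  have Hn : 1 - del < tn n < 1.
    have := HMa n (leq_maxl _ _); have := ler_norm (1 - tn n).
    have /andP[_ t1] := tn01 n; move=> h1 h2; apply/andP; split => //; lra.
  have := Hdel _ Hn; have := T3 (q i) (qt i (tn n)) b.
  rewrite (Sy (q i) (qt i (tn n))); lra.
split => // S [S1 SQ Smin]; exact: Smin _ P1 Qsub.
Qed.
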